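(* Let $k\ge 3$ and let $w$ be a word over $\{a,b\}$. Suppose an occurrence of $v=b^{k-1}a$ and an occurrence of $u=ba^{k-1}$ in $w$ are consecutive and overlap (the occurrence of $v$ first; necessarily the last two letters of $v$ coincide with the first two letters of $u$, giving the factor $b^{k-1}a^{k-1}$). Let $F_v,F_u\subseteq\{0,\dots,k-1\}$ be the corresponding sets of forbidden local positions. Then $$F_v\subseteq\{(j-2)\bmod k\mid j\in F_u\}\cup\{0\}.$$
   Context: $\Sigma=\{a,b\}$. For $k\ge 3$, $S_k=\left(\Sigma^k\setminus\{ba^{k-1},b^{k-1}a\}\right)\cup\left(\Sigma^{k-1}\setminus\{a^{k-1},b^{k-1}\}\right)$, $u=ba^{k-1}$, $v=b^{k-1}a$. $\mathit{Pref}(S^* )$ denotes the set of all prefixes of words in $S^*$. For $w=w_1\cdots w_n$, $w[i..j]=w_i\cdots w_j$ (empty if $i>j$). A position $j$, $0\le j\le n-1$, is forbidden in $w$ if $w[j+1..n]\notin\mathit{Pref}(S_k^* )$. An occurrence of $p\in\{u,v\}$ in $w$ is an index $s$ with $w[s+1..s+k]=p$; local position $i\in\{0,\dots,k-1\}$ of the occurrence is the position $s+i$ of $w$, and it is forbidden in the occurrence if $s+i$ is forbidden in $w$. Two occurrences of words from $\{u,v\}$ starting at $s<t$ overlap if $t<s+k$; they are consecutive if either they overlap or they are the only occurrences of $u$ or $v$ lying inside the factor $w[s+1..t+k]$. *)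

(* Defs.v *)
(* Words over {a,b} are encoded as seq bool with a = false, b = true. *)
From mathcomp Require Import all_boot.
Set Implicit Arguments. Unset Strict Implicit. Unset Printing Implicit Defensive.

Definition la : bool := false.
Definition lb : bool := true.

Definition uw (k : nat) : seq bool := lb :: nseq k.-1 la.
Definition vw (k : nat) : seq bool := rcons (nseq k.-1 lb) la.

Definition inS (k : nat) (x : seq bool) : bool :=
  [&& size x == k, x != uw k & x != vw k]
  || [&& size x == k.-1, x != nseq k.-1 la & x != nseq k.-1 lb].

Definition inSstar (k : nat) (y : seq bool) : Prop :=
  exists ws : seq (seq bool), all (inS k) ws /\ flatten ws = y.

Definition inPref (k : nat) (x : seq bool) : Prop :=
  exists z : seq bool, inSstar k (x ++ z).

(* position j (0 <= j <= n-1) is forbidden in w : w[j+1..n] = drop j w not in Pref(S_k-star ) *)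
Definition forbidden (k : nat) (w : seq bool) (j : nat) : Prop :=
  j < size w /\ ~ inPref k (drop j w).

Definition occurs_at (w p : seq bool) (s : nat) : bool :=
  (s + size p <= size w) && (take (size p) (drop s w) == p).

Definition occ_uv (k : nat) (w : seq bool) (s : nat) : bool :=
  occurs_at w (uw k) s || occurs_at w (vw k) s.

Definition overlap (k s t : nat) : Prop := s < t /\ t < s + k.

Definition consecutive (k : nat) (w : seq bool) (s t : nat) : Prop :=
  s < t /\
  (overlap k s t \/
   (forall r, s <= r -> r + k <= t + k -> occ_uv k w r -> r = s \/ r = t)).

(* Main.v *)
Require Import Defs.
From mathcomp Require Import all_boot.
From mathcomp Require Import zify.

Lemma occ_nth w p s : occurs_at w p s -> forall m, m < size p ->
  nth false w (s + m) = nth false p m.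
Proof. by move/andP=> [_ /eqP H] m Hm; rewrite -H nth_take // nth_drop. Qed.

Lemma nth_uw k m : nth false (uw k) m = (m == 0).
Proof. case: m => [|m] //=; by rewrite nth_nseq; case: ifP. Qed.

Lemma nth_vw k m : nth false (vw k) m = (m < k.-1).
Proof.
rewrite /vw nth_rcons size_nseq; case: ifP => h; first by rewrite nth_nseq h.
by case: (m == _).
Qed.

Lemma size_uw k : size (uw k) = k.-1.+1.
Proof. by rewrite /= size_nseq. Qed.
Lemma size_vw k : size (vw k) = k.-1.+1.
Proof. by rewrite size_rcons size_nseq. Qed.

Theorem lemma4 (k : nat) (w : seq bool) (s t : nat) :
  3 <= k ->
  occurs_at w (vw k) s ->
  occurs_at w (uw k) t ->
  consecutive k w s t ->
  overlap k s t ->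
  forall i, i < k -> forbidden k w (s + i) ->
    i = 0 \/ exists2 j, j < k & forbidden k w (t + j) /\ i = (j + k - 2) %% k.
Proof.
move=> hk hv hu _ [hst hts] i hi [hsz hnp].
have Nv := @occ_nth _ _ _ hv; have Nu := @occ_nth _ _ _ hu.
rewrite size_vw in Nv; rewrite size_uw in Nu.
have szw : t + k <= size w.
  by move: hu => /andP [+ _]; rewrite size_uw; lia.
have ht : t = s + k - 2.
  have Ut := Nu 0 ltac:(lia). rewrite nth_uw addn0 /= in Ut.
  case: (ltnP t (s + k - 2)) => h1.
    have Ut1 := Nu 1 ltac:(lia). rewrite nth_uw /= in Ut1.
    have V1 := Nv (t + 1 - s) ltac:(lia).
    have E : s + (t + 1 - s) = t + 1 by lia.
    rewrite nth_vw E Ut1 in V1. have : t + 1 - s < k.-1 by lia.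
    by rewrite -V1.
  case: (ltnP (s + k - 2) t) => h2; last by lia.
  have V1 := Nv (t - s) ltac:(lia). rewrite nth_vw in V1.
  have E : s + (t - s) = t by lia. rewrite E Ut in V1.
  have : t - s < k.-1 by rewrite -V1. lia.
case: (posnP i) => hi0; first by left.
right.
case: (leqP (k - 2) i) => hik.
  exists (i + 2 - k); first lia.
  have -> : t + (i + 2 - k) = s + i by lia.
  split; [by [] | rewrite modn_small; lia].
exists (i + 2); first lia.
split; last by rewrite (_ : i + 2 + k - 2 = i + k); [rewrite modnDr modn_small | lia].
split; first lia.
move=> [z [ws [Hall Hfl]]]; apply: hnp.
set y := nseq (k - 1 - i) true ++ nseq (i + 1) false.
have Ey : take k (drop (s + i) w) = y.
  apply: (@eq_from_nth _ false).
    rewrite size_take size_drop /y size_cat !size_nseq. case: ifP; lia.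
  move=> m; rewrite size_take size_drop => hm.
  have hmk : m < k by move: hm; case: ifP; lia.
  rewrite nth_take // nth_drop /y nth_cat size_nseq !nth_nseq.
  case: (ltnP m (k - 1 - i)) => h1.
    have V := Nv (i + m) ltac:(lia). rewrite nth_vw addnA in V. rewrite V. lia.
  have U := Nu (i + m + 2 - k) ltac:(lia). rewrite nth_uw in U.
  have -> : s + i + m = t + (i + m + 2 - k) by lia.
  rewrite U. case: ifP; lia.
exists z, (y :: ws); split.
  rewrite /= Hall andbT /inS; apply/orP; left.
  apply/and3P; split.
  - by rewrite /y size_cat !size_nseq; apply/eqP; lia.
  - apply/eqP => E. have := congr1 (nth false ^~ 1) E.
    rewrite nth_uw /y nth_cat size_nseq nth_nseq !ifT //; lia.
  - apply/eqP => E. have := congr1 (nth false ^~ (k - 2)) E.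
    rewrite nth_vw /y nth_cat size_nseq ifF; last lia.
    rewrite nth_nseq if_same => H; suff : k - 2 < k.-1 by rewrite -H. lia.
rewrite /= Hfl catA -Ey.
have -> : drop (t + (i + 2)) w = drop k (drop (s + i) w) by rewrite drop_drop; congr drop; lia.
by rewrite cat_take_drop.
Qed.
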